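(* For the RHA process, all $n\ge1$ and $j\ge1$, $$H(X^n_j)\ge\max_{l}\Big(\log\binom{k_{l-1}^2}{k_l}-\log\binom{k_{l-1}^2-2^{n-l}}{k_l-2^{n-l}}\Big)P(A_{nl}),$$ where the maximum ranges over $l\in\{1,\dots,n\}$ with $k_l\ge2^{n-l}$, and $A_{nl}$ is the event that the $2^{n-l}$ consecutive length-$2^l$ blocks $X^l_{2^{n-l}},\dots,X^l_{2^{n-l+1}-1}$ composing $X^n_1$ are pairwise distinct.
   Context: Random hierarchical association (RHA) process. Fix positive integers $(k_n)_{n\ge0}$ (perplexities) with $k_{n-1}\le k_n\le k_{n-1}^2$ for all $n\ge1$. On a probability space $(\Omega,\mathcal J,P)$ let, for each $n\ge1$, $(L_{nj},R_{nj})_{j=1}^{k_n}$ be the lexicographically sorted enumeration of a uniformly random $k_n$-element subset of $\{1,\dots,k_{n-1}\}^2$ (each of the $\binom{k_{n-1}^2}{k_n}$ subsets equally likely), independently over $n$. Let $(C_n)_{n\ge0}$ be independent, independent of all $(L_{nj},R_{nj})$, with $C_n$ uniform on $\{1,\dots,k_n\}$. Define strings $Y^0_j=j$ (length 1) for $1\le j\le k_0$ and $Y^n_j=Y^{n-1}_{L_{nj}}Y^{n-1}_{R_{nj}}$ (concatenation). The RHA process is $\mathcal X=Y^0_{C_0}Y^1_{C_1}Y^2_{C_2}\cdots=X_1X_2X_3\cdots$, $X_{k:l}=X_k\cdots X_l$; for $n\ge0$, $j\ge1$, $X^n_j=X_{j2^n:(j+1)2^n-1}$ (so $X^n_1=Y^n_{C_n}$).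 $H(X)=\mathbb E_P[-\log P(X)]$ with natural logarithm. *)

(* Defs.v *)
From Stdlib Require Import Reals.
From HB Require Import structures.
From mathcomp Require Import all_boot.


(* Finite model of the RHA process truncated after level M (levels 0..M).
   Values are 0-based: symbols 0..k_0-1, indices 0..k_l-1 (a bijective
   relabelling of the paper's 1-based conventions). *)

Definition Bnd (k : nat -> nat) (M : nat) : nat := \max_(l < M.+1) k l.

(* sample point: for each level l <= M a set S_l of pairs (the random
   k_l-subset of {0..k_{l-1}-1}^2; S_0 unused and forced empty) and C_l. *)
Notation Omega k M :=
  ({ffun 'I_M.+1 -> {set 'I_(Bnd k M) * 'I_(Bnd k M)}}
   * {ffun 'I_M.+1 -> 'I_(Bnd k M)})%type.

(* Validity: omega is in the support of the (uniform, independent) law. *)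
Definition Valid (k : nat -> nat) (M : nat) (w : Omega k M) : bool :=
  [forall i : 'I_M.+1,
     (val (w.2 i) < k i) &&
     (if val i is i'.+1 then
        (#|w.1 i| == k i) &&
        [forall p in w.1 i, (val p.1 < k i') && (val p.2 < k i')]
      else w.1 i == set0)].

Definition lexle (p q : nat * nat) : bool :=
  (p.1 < q.1) || ((p.1 == q.1) && (p.2 <= q.2)).

(* lexicographically sorted enumeration (L_{l,j}, R_{l,j})_j of S_l *)
Definition Sof (k : nat -> nat) (M : nat) (w : Omega k M) (l : nat)
  : seq (nat * nat) :=
  if l <= M then
    sort lexle [seq (val p.1, val p.2) | p <- enum (w.1 (@inord M l))]
  else [::].

Definition Cof (k : nat -> nat) (M : nat) (w : Omega k M) (l : nat) : nat :=
  if l <= M then val (w.2 (@inord M l)) else 0.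

Fixpoint Yf (S : nat -> seq (nat * nat)) (l j : nat) : seq nat :=
  match l with
  | 0 => [:: j]
  | l'.+1 => let p := nth (0, 0) (S l'.+1) j in Yf S l' p.1 ++ Yf S l' p.2
  end.

(* X_1 X_2 ... X_{2^(M+1)-1} = Y^0_{C_0} Y^1_{C_1} ... Y^M_{C_M} *)
Definition Xfin (k : nat -> nat) (M : nat) (w : Omega k M) : seq nat :=
  flatten [seq Yf (Sof k M w) l (Cof k M w l) | l <- iota 0 M.+1].

(* X^n_j = X_{j 2^n : (j+1) 2^n - 1}  (X is 1-indexed) *)
Definition Xblock (k : nat -> nat) (M : nat) (w : Omega k M) (n j : nat)
  : seq nat :=
  take (2 ^ n) (drop (j * 2 ^ n - 1) (Xfin k M w)).

Definition prob (k : nat -> nat) (M : nat) (E : pred (Omega k M)) : R :=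
  Rdiv (INR #|[pred w | Valid k M w && E w]|) (INR #|[pred w | Valid k M w]|).

Definition entropy (k : nat -> nat) (M : nat) (f : Omega k M -> seq nat) : R :=
  \big[Rplus/R0]_(s <- undup [seq f w | w <- enum [pred w : Omega k M | Valid k M w]])
    Ropp (Rmult (prob k M (fun w => f w == s)) (ln (prob k M (fun w => f w == s)))).

Definition Aevent (k : nat -> nat) (M : nat) (n l : nat) (w : Omega k M) : bool :=
  uniq [seq Xblock k M w l i | i <- iota (2 ^ (n - l)) (2 ^ (n - l))].

Definition binterm (k : nat -> nat) (n l : nat) : R :=
  Rminus (ln (INR 'C(k l.-1 ^ 2, k l)))
         (ln (INR 'C(k l.-1 ^ 2 - 2 ^ (n - l), k l - 2 ^ (n - l)))).

(* maximum of a nonempty list of reals (0 on the empty list, never used) *)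
Definition maxR (s : seq R) : R :=
  match s with [::] => R0 | x :: s' => foldr Rmax x s' end.

(* Main.v *)
Require Import Defs.
From Stdlib Require Import Reals Lra.
From HB Require Import structures.
From mathcomp Require Import all_boot zify.
Unset Printing Implicit Defensive.

Definition region (k : nat -> nat) (B : nat) (i' : nat) : {set 'I_B * 'I_B} :=
  [set p | (val p.1 < k i') && (val p.2 < k i')].

Definition setok (k : nat -> nat) (M : nat) (i : 'I_M.+1) (T : {set 'I_(Bnd k M) * 'I_(Bnd k M)}) : bool :=
  if val i is i'.+1 then (#|T| == k i) && (T \subset region k (Bnd k M) i') else T == set0.

Definition lv (k : nat -> nat) (M : nat) (i : 'I_M.+1)
  (z : {set 'I_(Bnd k M) * 'I_(Bnd k M)} * 'I_(Bnd k M)) : bool :=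
  (val z.2 < k i) && setok k M i z.1.

Lemma ValidE k M (w : Omega k M) : Valid k M w = [forall i, lv k M i (w.1 i, w.2 i)].
Proof.
apply: eq_forallb => i; rewrite /lv /setok /=; congr (_ && _).
case: i => [[|i'] hi] //=; congr (_ && _).
apply/forall_inP/subsetP => h p /h.
  by rewrite inE.
by rewrite inE.
Qed.

Section Rep.
Variables (k : nat -> nat) (M : nat).
Local Notation B := (Bnd k M).
Local Notation Om := (Omega k M).
Local Notation Z := ({set 'I_B * 'I_B} * 'I_B)%type.

Definition repL (i : 'I_M.+1) (w : Om) (z : Z) : Om :=
  ([ffun j => if j == i then z.1 else w.1 j], [ffun j => if j == i then z.2 else w.2 j]).
Definition getL (i : 'I_M.+1) (w : Om) : Z := (w.1 i, w.2 i).
Definition rep2 (i : 'I_M.+1) (w : Om) (d : 'I_B) : Om :=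
  (w.1, [ffun j => if j == i then d else w.2 j]).

Lemma getL_repL i w z : getL i (repL i w z) = z.
Proof. by rewrite /getL /repL !ffunE eqxx; case: z. Qed.

Lemma repL_repL i w z : repL i (repL i w z) (getL i w) = w.
Proof.
case: w => w1 w2; rewrite /repL /getL /=; congr (_, _); apply/ffunP => j; rewrite !ffunE;
  by case: eqP => // ->.
Qed.

Lemma get2_rep2 i w d : (rep2 i w d).2 i = d.
Proof. by rewrite /rep2 ffunE eqxx. Qed.

Lemma rep2_rep2 i w d : rep2 i (rep2 i w d) (w.2 i) = w.
Proof.
case: w => w1 w2; rewrite /rep2 /=; congr (_, _); apply/ffunP => j; rewrite !ffunE;
  by case: eqP => // ->.
Qed.

Lemma forall_split (P : pred 'I_M.+1) i :
  [forall j, P j] = P i && [forall j, (j != i) ==> P j].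
Proof.
apply/forallP/andP => [h|[h1 /forallP h2] j].
  by split; [apply: h | apply/forallP => j; apply/implyP => _; apply: h].
by case: (eqVneq j i) => [->|ne] //; move: (h2 j); rewrite ne.
Qed.

Lemma valid_repL i w z :
  Valid k M (repL i w z) && lv k M i (getL i w) = Valid k M w && lv k M i z.
Proof.
rewrite !ValidE (forall_split _ i) [in RHS](forall_split _ i).
rewrite /repL /getL !ffunE eqxx /=.
have -> : [forall j, (j != i) ==> lv k M j
     ([ffun j0 => if j0 == i then z.1 else w.1 j0] j,
      [ffun j0 => if j0 == i then z.2 else w.2 j0] j)] =
   [forall j, (j != i) ==> lv k M j (w.1 j, w.2 j)].
  apply: eq_forallb => j; rewrite !ffunE; by case: eqP.
case: z => z1 z2 /=.
by case: (lv k M i (z1, z2)); case: (lv k M i (w.1 i, w.2 i)); case: [forall j, _].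
Qed.

Lemma valid_rep2 i w d :
  Valid k M (rep2 i w d) && (val (w.2 i) < k i) = Valid k M w && (val d < k i).
Proof.
rewrite !ValidE (forall_split _ i) [in RHS](forall_split _ i).
rewrite /rep2 !ffunE eqxx /=.
have -> : [forall j, (j != i) ==> lv k M j
     (w.1 j, [ffun j0 => if j0 == i then d else w.2 j0] j)] =
   [forall j, (j != i) ==> lv k M j (w.1 j, w.2 j)].
  apply: eq_forallb => j; rewrite !ffunE; by case: eqP.
rewrite /lv /=.
by case: (val d < k i); case: (val (w.2 i) < k i); case: (setok k M i (w.1 i)); case: [forall j, _].
Qed.

End Rep.

Fixpoint desc (S : nat -> seq (nat * nat)) (b a i q : nat) : nat :=
  match a with
  | 0 => i
  | a'.+1 => let p := nth (0, 0) (S (b + a').+1) i in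
      if q < 2 ^ a' then desc S b a' p.1 q else desc S b a' p.2 (q - 2 ^ a')
  end.

Lemma size_Yf S l j : size (Yf S l j) = 2 ^ l.
Proof.
elim: l j => [|l IH] j //=.
by rewrite size_cat !IH expnS mul2n addnn.
Qed.

Lemma Yf_desc S b a i q : q < 2 ^ a ->
  take (2 ^ b) (drop (q * 2 ^ b) (Yf S (b + a) i)) = Yf S b (desc S b a i q).
Proof.
elim: a i q => [|a IH] i q hq /=.
  have -> : q = 0 by move: hq; rewrite expn0; lia.
  by rewrite addn0 mul0n drop0 take_oversize // size_Yf.
rewrite addnS /= drop_cat !size_Yf.
have e1 : 2 ^ (b + a) = 2 ^ b * 2 ^ a by rewrite expnD.
have ha : 2 ^ a.+1 = 2 * 2 ^ a by rewrite expnS.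
have hb : 0 < 2 ^ b by rewrite expn_gt0.
case: (ltnP q (2 ^ a)) => hq2.
  rewrite ifT; last by rewrite e1; nia.
  rewrite takel_cat; last by rewrite size_drop size_Yf e1; nia.
  exact: IH.
rewrite ifF; last by apply/negbTE; rewrite -leqNgt e1; nia.
have -> : q * 2 ^ b - 2 ^ (b + a) = (q - 2 ^ a) * 2 ^ b by rewrite e1 mulnBl (mulnC (2 ^ a)).
apply: IH; lia.
Qed.

Lemma size_flat_pow (F : nat -> seq nat) m : (forall l, size (F l) = 2 ^ l) ->
  size (flatten [seq F l | l <- iota 0 m]) = 2 ^ m - 1.
Proof.
move=> hF; elim: m => [|m IH] //.
rewrite -addn1 iotaD map_cat flatten_cat size_cat IH /= cats0 hF add0n expnD expn1.
have : 0 < 2 ^ m by rewrite expn_gt0.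
lia.
Qed.

Lemma drop_flat (F : nat -> seq nat) m K : (forall l, size (F l) = 2 ^ l) -> m < K ->
  drop (2 ^ m - 1) (flatten [seq F l | l <- iota 0 K]) =
  F m ++ flatten [seq F l | l <- iota m.+1 (K - m.+1)].
Proof.
move=> hF hK.
rewrite (_ : K = m + (K - m.+1).+1); last by lia.
rewrite iotaD map_cat flatten_cat drop_size_cat; last by rewrite size_flat_pow.
by rewrite add0n /=; congr (_ ++ flatten _); congr (map _ (iota _ _)); lia.
Qed.

Lemma Xblock_desc k M w n a q : n + a <= M -> q < 2 ^ a ->
  Xblock k M w n (2 ^ a + q) =
  Yf (Sof k M w) n (desc (Sof k M w) n a (Cof k M w (n + a)) q).
Proof.
move=> hM hq.
rewrite /Xblock /Xfin.
have e1 : 2 ^ (n + a) = 2 ^ n * 2 ^ a by rewrite expnD.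
have hn : 0 < 2 ^ n by rewrite expn_gt0.
rewrite (_ : (2 ^ a + q) * 2 ^ n - 1 = q * 2 ^ n + (2 ^ (n + a) - 1)); last by rewrite e1; nia.
rewrite -drop_drop (drop_flat (fun l => Yf (Sof k M w) l (Cof k M w l))); last by lia.
  rewrite drop_cat size_Yf ifT; last by rewrite e1; nia.
  rewrite takel_cat; last by rewrite size_drop size_Yf e1; nia.
  exact: Yf_desc.
by move=> l; rewrite size_Yf.
Qed.

Definition good (l m : nat) (s : seq nat) : bool :=
  uniq [seq take (2 ^ l) (drop (t * 2 ^ l) s) | t <- iota 0 m].

Lemma take_drop_take (s : seq nat) i j N : i + j <= N ->
  take i (drop j (take N s)) = take i (drop j s).
Proof. by move=> h; rewrite !take_drop take_takel. Qed.

Lemma Aevent_good k M n l w : l <= n ->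
  Aevent k M n l w = good l (2 ^ (n - l)) (Xblock k M w n 1).
Proof.
move=> hl; rewrite /Aevent /good.
have e : 2 ^ (n - l) * 2 ^ l = 2 ^ n by rewrite -expnD subnK.
rewrite -{1}(addn0 (2 ^ (n - l))) iotaDl -map_comp.
congr uniq; apply/eq_in_map => t; rewrite mem_iota add0n => /andP [_ ht] /=.
rewrite /Xblock take_drop_take; last by rewrite -e; nia.
rewrite drop_drop; congr (take _ (drop _ _)).
have : 0 < 2 ^ l by rewrite expn_gt0.
rewrite mul1n -e; nia.
Qed.


Section Valid.
Variables (k : nat -> nat) (M : nat).
Local Notation B := (Bnd k M).

Definition vv (p : 'I_B * 'I_B) : nat * nat := (val p.1, val p.2).
Definition srt (T : {set 'I_B * 'I_B}) : seq (nat * nat) := sort lexle [seq vv p | p <- enum T].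

Lemma vv_inj : injective vv.
Proof. move=> [a b] [c d] [h1 h2]; congr (_, _); exact: val_inj. Qed.

Lemma Sof_E w l : l <= M -> Sof k M w l = srt (w.1 (inord l)).
Proof. move=> h; rewrite /Sof h; reflexivity. Qed.

Lemma Cof_E w l : l <= M -> Cof k M w l = val (w.2 (inord l)).
Proof. move=> h; rewrite /Cof h; reflexivity. Qed.

Lemma srt_uniq T : uniq (srt T).
Proof. rewrite /srt sort_uniq (map_inj_uniq vv_inj); exact: enum_uniq. Qed.

Lemma size_srt T : size (srt T) = #|T|.
Proof. rewrite /srt size_sort size_map cardE; reflexivity. Qed.

Lemma mem_srt T p : (p \in srt T) = [exists q in T, vv q == p].
Proof.
rewrite /srt mem_sort; apply/mapP/exists_inP => [[q hq ->]|[q hq /eqP <-]].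
  exists q; [rewrite -mem_enum; exact: hq | exact: eqxx].
exists q; [rewrite mem_enum; exact: hq | reflexivity].
Qed.

Lemma valid_lv w (i : 'I_M.+1) : Valid k M w -> lv k M i (w.1 i, w.2 i).
Proof. rewrite ValidE => /forallP h; exact: h. Qed.

Lemma valid_Cof w l : Valid k M w -> l <= M -> Cof k M w l < k l.
Proof.
move=> hv hl; rewrite Cof_E //; have := valid_lv w (inord l) hv.
rewrite /lv inordK // => /andP [h _]; exact: h.
Qed.

Lemma valid_Sof w l : Valid k M w -> 0 < l -> l <= M ->
  [/\ uniq (Sof k M w l), size (Sof k M w l) = k l &
     forall p, p \in Sof k M w l -> (p.1 < k l.-1) && (p.2 < k l.-1)].
Proof.
move=> hv l0 hl; rewrite Sof_E //; have := valid_lv w (inord l) hv.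
rewrite /lv /setok /= inordK //.
case: l l0 hl => [|l] l0 hl; first by [].
move=> /andP [_ /andP [/eqP hc hs]].
split; first exact: srt_uniq.
  by rewrite size_srt hc.
move=> p; rewrite mem_srt => /exists_inP [q /(subsetP hs)]; rewrite inE => hq /eqP <-.
exact: hq.
Qed.

Lemma desc_lt w n a i q : Valid k M w -> n + a <= M -> i < k (n + a) ->
  desc (Sof k M w) n a i q < k n.
Proof.
move=> hv; elim: a i q => [|a IH] i q ha hi /=.
  by move: hi; rewrite addn0.
have hM : (n + a).+1 <= M by rewrite -addnS.
have [hu hs hp] := valid_Sof w (n + a).+1 hv (ltn0Sn _) hM.
have hin : nth (0, 0) (Sof k M w (n + a).+1) i \in Sof k M w (n + a).+1.
  by apply: mem_nth; rewrite hs -addnS.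
move/andP: (hp _ hin) => [h1 h2].
have ha' : n + a <= M by apply: leq_trans ha; rewrite addnS.
by case: ifP => _; apply: IH.
Qed.

Lemma Y_inj w l i i' : Valid k M w -> l <= M -> i < k l -> i' < k l ->
  Yf (Sof k M w) l i = Yf (Sof k M w) l i' -> i = i'.
Proof.
move=> hv; elim: l i i' => [|l IH] i i' hl hi hi' /=.
  by case.
have [hu hs hp] := valid_Sof w l.+1 hv (ltn0Sn _) hl.
have hin : forall x, x < k l.+1 -> nth (0, 0) (Sof k M w l.+1) x \in Sof k M w l.+1.
  by move=> x hx; apply: mem_nth; rewrite hs.
move/eqP; rewrite eqseq_cat; last by rewrite !size_Yf.
case/andP => /eqP e1 /eqP e2.
move/andP: (hp _ (hin _ hi)) => [a1 a2]; move/andP: (hp _ (hin _ hi')) => [b1 b2].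
have hl' : l <= M by apply: ltnW.
have f1 := IH _ _ hl' a1 b1 e1.
have f2 := IH _ _ hl' a2 b2 e2.
apply/eqP; rewrite -(nth_uniq (0, 0) _ _ hu) ?hs //.
by apply/eqP; move: f1 f2; case: (nth _ _ i); case: (nth _ _ i') => /= ? ? ? ? -> ->.
Qed.

Lemma Sof_repL w i z l : Sof k M (repL k M i w z) l =
  if (l <= M) && (inord l == i) then srt z.1 else Sof k M w l.
Proof.
rewrite /Sof /repL /=; case: (l <= M) => //=; rewrite ffunE; case: ifP => //.
Qed.

Lemma Cof_repL w i z l : Cof k M (repL k M i w z) l =
  if (l <= M) && (inord l == i) then val z.2 else Cof k M w l.
Proof.
rewrite /Cof /repL /=; case: (l <= M) => //=; rewrite ffunE; case: ifP => //.
Qed.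

Lemma Sof_rep2 w i d l : Sof k M (rep2 k M i w d) l = Sof k M w l.
Proof. by []. Qed.

Lemma Cof_rep2 w i d l : Cof k M (rep2 k M i w d) l =
  if (l <= M) && (inord l == i) then val d else Cof k M w l.
Proof.
rewrite /Cof /rep2 /=; case: (l <= M) => //=; rewrite ffunE; case: ifP => //.
Qed.
End Valid.

Lemma cnt_sup (X : finType) (Bs P : {set X}) K : P \subset Bs -> #|P| <= K ->
  #|[set T : {set X} | (T \subset Bs) && (#|T| == K) && (P \subset T)]| =
  'C(#|Bs| - #|P|, K - #|P|).
Proof.
move=> hPB hPK.
have -> : [set T : {set X} | (T \subset Bs) && (#|T| == K) && (P \subset T)] =
   [set U :|: P | U : {set X} in [set U0 : {set X} | (U0 \subset Bs :\: P) && (#|U0| == K - #|P|)]].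
  apply/setP => T; rewrite !inE; apply/idP/imsetP.
    case/andP => [/andP [hTB /eqP hT] hPT].
    exists (T :\: P).
      rewrite inE; apply/andP; split; first exact: setSD.
      by rewrite cardsD (setIidPr hPT) hT.
    apply/setP => x; rewrite !inE; case hx: (x \in P); last by rewrite /= orbF.
    by rewrite orbT; apply: (subsetP hPT).
  case=> U; rewrite inE => /andP [hU /eqP hc] ->.
  have hUP : U :&: P = set0.
    apply/setP => x; rewrite !inE; apply/negbTE; apply/negP => /andP [hx1 hx2].
    by move: (subsetP hU x hx1); rewrite !inE hx2.
  rewrite subUset hPB andbT subsetUr andbT; apply/andP; split.
    by apply: (subset_trans hU); apply: subsetDl.
  by rewrite cardsU hUP cards0 subn0 hc subnK.
rewrite card_in_imset; first by rewrite cards_draws cardsD (setIidPr hPB).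
move=> U1 U2; rewrite !inE => /andP [h1 _] /andP [h2 _] e.
apply/setP => x; move/setP: e => /(_ x); rewrite !inE.
case hx: (x \in P); last by rewrite !orbF.
move=> _.
have n1 : x \notin U1 by apply/negP => /(subsetP h1); rewrite !inE hx.
have n2 : x \notin U2 by apply/negP => /(subsetP h2); rewrite !inE hx.
by rewrite (negbTE n1) (negbTE n2).
Qed.

Lemma cnt_sup_le (X : finType) (Bs P : {set X}) K : #|P| <= K ->
  #|[set T : {set X} | (T \subset Bs) && (#|T| == K) && (P \subset T)]| <=
  'C(#|Bs| - #|P|, K - #|P|).
Proof.
move=> hPK; case hPB: (P \subset Bs); first by rewrite cnt_sup.
suff -> : [set T : {set X} | (T \subset Bs) && (#|T| == K) && (P \subset T)] = set0 by rewrite cards0.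
apply/setP => T; rewrite !inE.
apply/negbTE; apply/negP => /andP [/andP [hTB _] hPT].
by move: hPB; rewrite (subset_trans hPT hTB).
Qed.

Lemma card_ord_lt B c : c <= B -> #|[set x : 'I_B | x < c]| = c.
Proof.
move=> hc; rewrite -sum1dep_card.
rewrite big_mkcond /= -(big_mkord xpredT (fun i => if i < c then 1 else 0)).
rewrite (@big_cat_nat _ _ _ c 0 B _ _ (leq0n c) hc) /=.
rewrite (@eq_big_nat _ _ _ 0 c _ (fun _ => 1)); last by move=> i /andP [_ ->].
rewrite (@eq_big_nat _ _ _ c B _ (fun _ => 0)); last by move=> i /andP [h _]; rewrite ltnNge h.
by rewrite !sum_nat_const_nat muln1 muln0 addn0 subn0.
Qed.

Lemma card_ord_cnt B K (P : pred nat) : K <= B ->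
  #|[set d : 'I_B | (d < K) && P d]| = count P (iota 0 K).
Proof.
move=> hc; rewrite -sum1dep_card.
rewrite big_mkcond /= -(big_mkord xpredT (fun i => if (i < K) && P i then 1 else 0)).
rewrite (@big_cat_nat _ _ _ K 0 B _ _ (leq0n K) hc) /=.
rewrite (@eq_big_nat _ _ _ K B _ (fun _ => 0)); last by move=> i /andP [h _]; rewrite ltnNge h.
rewrite big_const_nat iter_addn_0 mul0n addn0.
rewrite (@eq_big_nat _ _ _ 0 K _ (fun i => if P i then 1 else 0)); last by move=> i /andP [_ ->].
rewrite -sum1_count [in RHS]big_mkcond /=.
by rewrite /index_iota subn0.
Qed.

Lemma cardP (T : finType) (P : pred T) : #|[pred x | P x]| = \sum_(x : T) (P x : nat).
Proof. rewrite -sum1_card big_mkcond /=; apply: eq_bigr => x _; by rewrite unfold_in; case: (P x). Qed.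

Lemma sum_pairE (A Z : finType) (F : A * Z -> nat) :
  \sum_(p : A * Z) F p = \sum_a \sum_z F (a, z).
Proof. rewrite pair_bigA; apply: eq_bigr; by case. Qed.

Section Lvl.
Variables (k : nat -> nat) (M : nat).
Local Notation B := (Bnd k M).

Lemma Bnd_ge l : l <= M -> k l <= B.
Proof.
move=> hl; have := @leq_bigmax _ (fun i : 'I_M.+1 => k i) (inord l).
by rewrite /= inordK.
Qed.

Lemma card_region l : l <= M -> #|region k B l| = k l * k l.
Proof.
move=> hl.
have -> : region k B l = setX [set x : 'I_B | x < k l] [set x : 'I_B | x < k l].
  by apply/setP => p; rewrite !inE.
by rewrite cardsX card_ord_lt // Bnd_ge.
Qed.

Lemma setok_inord m T : 0 < m -> m <= M ->
  setok k M (inord m) T = (#|T| == k m) && (T \subset region k B m.-1).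
Proof.
move=> m0 hm; have e : nat_of_ord (inord m : 'I_M.+1) = m by rewrite inordK.
rewrite /setok e; case: m m0 hm e => [|m] // _ _ e.
have e2 : \val (inord m.+1 : 'I_M.+1) = m.+1 by exact: e.
by rewrite e2.
Qed.

Lemma card_setok m : 0 < m -> m <= M ->
  #|[pred T | setok k M (inord m) T]| = 'C(k m.-1 * k m.-1, k m).
Proof.
move=> m0 hm.
rewrite -card_region; last by apply: leq_trans (leq_pred m) hm.
have := cnt_sup _ (region k B m.-1) set0 (k m) (sub0set _) (ltac:(by rewrite cards0)).
rewrite cards0 !subn0 => <-.
apply: eq_card => T; rewrite !inE setok_inord // sub0set andbT.
by rewrite andbC.
Qed.

Lemma card_lv m : 0 < m -> m <= M ->
  #|[pred z | lv k M (inord m) z]| = 'C(k m.-1 * k m.-1, k m) * k m.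
Proof.
move=> m0 hm; rewrite cardP sum_pairE -card_setok // cardP big_distrl /=.
apply: eq_bigr => T _.
transitivity (\sum_(d : 'I_B) (setok k M (inord m) T : nat) * (val d < k m : nat)).
  apply: eq_bigr => d _; rewrite /lv /= inordK //.
  by case: (setok _ _ _ _); case: (_ < _).
rewrite -big_distrr /=; congr (_ * _).
rewrite -[RHS](card_ord_lt _ _ (Bnd_ge m hm)) -sum1dep_card [RHS]big_mkcond; apply: eq_bigr => d _; by case: (_ < _).
Qed.
End Lvl.

Definition crd (bt : bool) (p : nat * nat) : nat := if bt then p.2 else p.1.

Section Lvl2.
Variables (k : nat -> nat) (M : nat).
Local Notation B := (Bnd k M).

Lemma card_line (bt : bool) l x : l <= M -> x < k l ->
  #|[set q : 'I_B * 'I_B | (q \in region k B l) && (crd bt (vv k M q) == x)]| = k l.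
Proof.
move=> hl hx.
have hB := Bnd_ge k M l hl.
have hxB : x < B by apply: leq_trans hB.
have -> : [set q : 'I_B * 'I_B | (q \in region k B l) && (crd bt (vv k M q) == x)] =
          (fun y : 'I_B => if bt then (y, Ordinal hxB) else (Ordinal hxB, y)) @: [set y : 'I_B | y < k l].
  apply/setP => [[a b]]; rewrite !inE /crd /vv /=; apply/idP/imsetP.
    case/andP => [/andP [ha hb] /eqP e]; case: bt e => e.
      by exists a; [rewrite inE | congr (_, _); apply: val_inj; rewrite /= -e].
    by exists b; [rewrite inE | congr (_, _); apply: val_inj; rewrite /= -e].
  case=> y; rewrite inE => hy; case: bt => [[-> ->]|[-> ->]] /=;
    by rewrite hx hy eqxx.
rewrite card_imset ?card_ord_lt //.
by move=> y1 y2; case: bt => [[]|[]].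
Qed.

Lemma cnt_T_q m q : 0 < m -> m <= M -> 0 < k m ->
  #|[pred T | setok k M (inord m) T && (q \in T)]| =
  (q \in region k B m.-1) * 'C(k m.-1 * k m.-1 - 1, k m - 1).
Proof.
move=> m0 hm hk.
have hm' : m.-1 <= M by apply: leq_trans (leq_pred m) hm.
case hq: (q \in region k B m.-1); rewrite ?mul1n ?mul0n.
  rewrite -(card_region k M m.-1 hm') -(cards1 q).
  rewrite -(cnt_sup _ _ _ _ (_ : [set q] \subset region k B m.-1)); first last.
  - by rewrite cards1.
  - by rewrite sub1set.
  apply: eq_card => T; rewrite !inE setok_inord // sub1set.
  by rewrite (andbC (#|T| == k m)).
apply/eqP; rewrite cardP sum_nat_eq0; apply/forallP => T; apply/implyP => _.
rewrite eqb0 setok_inord //; apply/negP => /andP [/andP [_ hs] hT].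
by move: (subsetP hs q hT); rewrite hq.
Qed.
End Lvl2.

Definition Elvl (k : nat -> nat) (M : nat) (bt : bool)
  (z : {set 'I_(Bnd k M) * 'I_(Bnd k M)} * 'I_(Bnd k M)) : nat :=
  crd bt (nth (0, 0) (srt k M z.1) (val z.2)).

Section Lvl3.
Variables (k : nat -> nat) (M : nat).
Local Notation B := (Bnd k M).

Lemma count_srt (P : pred (nat * nat)) T :
  count P (srt k M T) = \sum_(q in T) (P (vv k M q) : nat).
Proof.
rewrite /srt count_sort count_map -sum1_count big_enum_cond big_mkcondr /=.
by apply: eq_bigr => q _; rewrite /preim /=; case: (P _).
Qed.

Lemma card_E_sum m bt x : 0 < m -> m <= M ->
  #|[pred z | lv k M (inord m) z && (Elvl k M bt z == x)]| =
  \sum_(T : {set 'I_B * 'I_B}) (setok k M (inord m) T : nat) *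
      count (fun p => crd bt p == x) (srt k M T).
Proof.
move=> m0 hm; rewrite cardP sum_pairE; apply: eq_bigr => T _.
case hs: (setok k M (inord m) T); last first.
  rewrite mul0n; apply/eqP; rewrite sum_nat_eq0; apply/forallP => d; apply/implyP => _.
  by rewrite /lv /= hs andbF.
rewrite mul1n.
have hsz : size (srt k M T) = k m.
  by move: hs; rewrite setok_inord // size_srt => /andP [/eqP -> _].
transitivity #|[set d : 'I_B | (d < k m) && (crd bt (nth (0, 0) (srt k M T) d) == x)]|.
  rewrite -sum1dep_card [RHS]big_mkcond; apply: eq_bigr => d _.
  rewrite /lv /Elvl /= hs andbT inordK //.
rewrite (card_ord_cnt _ _ (fun d => crd bt (nth (0, 0) (srt k M T) d) == x)); last exact: Bnd_ge.
by rewrite -{2}(mkseq_nth (0, 0) (srt k M T)) hsz /mkseq count_map.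
Qed.

Lemma card_E m bt x : 0 < m -> m <= M -> 0 < k m -> x < k m.-1 ->
  #|[pred z | lv k M (inord m) z && (Elvl k M bt z == x)]| * k m.-1 =
  #|[pred z | lv k M (inord m) z]|.
Proof.
move=> m0 hm hk hx.
have hm' : m.-1 <= M by apply: leq_trans (leq_pred m) hm.
rewrite card_E_sum // card_lv //.
set C' := 'C(k m.-1 * k m.-1 - 1, k m - 1).
have -> : \sum_(T : {set 'I_B * 'I_B}) (setok k M (inord m) T : nat) *
      count (fun p => crd bt p == x) (srt k M T) = C' * k m.-1.
  transitivity (\sum_(T : {set 'I_B * 'I_B}) \sum_(q : 'I_B * 'I_B)
      ((setok k M (inord m) T && (q \in T) : nat) * (crd bt (vv k M q) == x : nat))).
    apply: eq_bigr => T _; rewrite count_srt big_distrr big_mkcond /=.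
    by apply: eq_bigr => q _; case: (q \in T); case: (setok _ _ _ _); rewrite ?mul0n ?mul1n.
  rewrite exchange_big /=.
  transitivity (\sum_(q : 'I_B * 'I_B) (crd bt (vv k M q) == x : nat) *
      #|[pred T | setok k M (inord m) T && (q \in T)]|).
    apply: eq_bigr => q _; rewrite cardP big_distrr /=; apply: eq_bigr => T _.
    by rewrite mulnC.
  transitivity (\sum_(q : 'I_B * 'I_B) C' * ((q \in region k B m.-1) && (crd bt (vv k M q) == x) : nat)).
    apply: eq_bigr => q _; rewrite cnt_T_q // /C'.
    by case: (q \in _); case: (_ == _); rewrite ?mul0n ?mul1n ?muln0 ?muln1.
  rewrite -big_distrr /=; congr (_ * _).
  rewrite -(card_line k M bt (m.-1) x hm' hx) -sum1dep_card [RHS]big_mkcond.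
  by apply: eq_bigr => q _; case: (_ && _).
have h := mul_bin_diag (k m.-1 * k m.-1) (k m - 1).
rewrite /C' !subn1 -mulnA mulnC.
move: h; rewrite subn1 prednK // => ->; by rewrite mulnC.
Qed.
End Lvl3.

Lemma sum_bool_count (T : Type) (r : seq T) (P : pred T) :
  \sum_(x <- r) (P x : nat) = count P r.
Proof. elim: r => [|a r IH]; by rewrite ?big_nil ?big_cons ?IH. Qed.

Lemma sum_iota_eq (y K : nat) : y < K -> \sum_(0 <= x < K) (x == y : nat) = 1.
Proof.
move=> hy; rewrite sum_bool_count /index_iota subn0.
have := count_uniq_mem y (iota_uniq 0 K); rewrite mem_iota add0n hy /= => <-.
by apply: eq_count => x.
Qed.

Lemma partition_cnt (Z : finType) (B : nat) (lvp : pred Z) (E : Z -> nat) K' Lc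
  (h : nat -> bool) :
  K' <= B -> (forall z, lvp z -> E z < K') ->
  (forall x, x < K' -> #|[pred z | lvp z && (E z == x)]| * K' = Lc) ->
  #|[pred z | lvp z && h (E z)]| * K' = Lc * #|[pred d : 'I_B | (d < K') && h d]|.
Proof.
move=> hKB hE hc.
have e1 : #|[pred z | lvp z && h (E z)]| =
   \sum_(0 <= x < K') (h x : nat) * #|[pred z | lvp z && (E z == x)]|.
  rewrite cardP.
  transitivity (\sum_z \sum_(0 <= x < K') (x == E z : nat) * ((lvp z && h x) : nat)).
    apply: eq_bigr => z _; case hz: (lvp z); last first.
      by rewrite /= big1 // => x _; rewrite muln0.
    rewrite (eq_bigr (fun x => (x == E z : nat) * (h (E z) : nat))); last first.
      by move=> x _; case: eqP => [->|]; rewrite ?mul0n.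
    by rewrite -big_distrl /= sum_iota_eq ?hE // mul1n.
  rewrite exchange_big /=; apply: eq_bigr => x _.
  rewrite cardP big_distrr /=; apply: eq_bigr => z _.
  by case: (lvp z); case: (h x); case: eqP => [->|/nesym/eqP/negbTE ->]; rewrite ?eqxx.
rewrite e1 big_distrl /=.
rewrite (@eq_big_nat _ _ _ 0 K' _ (fun x => Lc * (h x : nat))); last first.
  by move=> x /andP [_ hx]; rewrite -mulnA hc // mulnC.
rewrite -big_distrr /=; congr (_ * _).
rewrite sum_bool_count /index_iota subn0 -(card_ord_cnt B K' h hKB).
by apply: eq_card => d; rewrite !inE.
Qed.

Lemma invol_sum (T : finType) (f : T -> T) (F : T -> nat) :
  (forall x, f (f x) = x) -> \sum_x F (f x) = \sum_x F x.
Proof. move=> ff; symmetry; apply: reindex_inj; exact: (can_inj ff). Qed.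

Lemma rep_sum (A Z : finType) (rep : A -> Z -> A) (get : A -> Z) (F : A -> Z -> nat) :
  (forall w z, get (rep w z) = z) -> (forall w z, rep (rep w z) (get w) = w) ->
  \sum_a \sum_z F a z = \sum_a \sum_z F (rep a z) (get a).
Proof.
move=> h1 h2. rewrite !pair_bigA.
rewrite -(@invol_sum _ (fun p => (rep p.1 p.2, get p.1)) (fun p => F p.1 p.2)) //.
by case=> w z /=; rewrite h1 h2.
Qed.

Section Key.
Variables (k : nat -> nat) (M : nat).
Local Notation B := (Bnd k M).

Lemma Elvl_lt m bt z : 0 < m -> m <= M -> lv k M (inord m) z -> Elvl k M bt z < k m.-1.
Proof.
move=> m0 hm; case: z => T d; rewrite /lv /= setok_inord // inordK //.
case/andP => hd /andP [/eqP hc hs].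
have hin : nth (0, 0) (srt k M T) d \in srt k M T by apply: mem_nth; rewrite size_srt hc.
move: hin; rewrite mem_srt => /exists_inP [q hq /eqP e].
move: (subsetP hs q hq); rewrite inE => /andP [h1 h2].
by rewrite /Elvl /= -e /crd /vv; case: bt.
Qed.

Lemma inord_eqM l m : l <= M -> m <= M -> ((inord l : 'I_M.+1) == inord m) = (l == m).
Proof.
move=> hl hm; apply/eqP/eqP => [e|->] //.
have e1 := inordK (n' := M) (m := l) hl; have e2 := inordK (n' := M) (m := m) hm.
by rewrite -e1 e e2.
Qed.
End Key.

Section Key2.
Variables (k : nat -> nat) (M : nat).
Local Notation B := (Bnd k M).
Local Notation Om := (Omega k M).

Lemma keyK m bt (H : Om -> nat -> bool) :
  (forall l, 0 < k l) -> 0 < m -> m <= M -> k m <= k m.-1 * k m.-1 ->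
  (forall w w', (forall l, l < m -> Sof k M w l = Sof k M w' l) -> forall x, H w x = H w' x) ->
  #|[pred w | Valid k M w && H w (crd bt (nth (0, 0) (Sof k M w m) (Cof k M w m)))]| =
  #|[pred w | Valid k M w && H w (Cof k M w m.-1)]|.
Proof.
move=> hk0 m0 hm hK hH.
have hm' : m.-1 <= M by apply: leq_trans (leq_pred m) hm.
pose i := (inord m : 'I_M.+1).
pose i' := (inord m.-1 : 'I_M.+1).
pose L := #|[pred z | lv k M i z]|.
have hL : 0 < L by rewrite /L card_lv // muln_gt0 bin_gt0 hK hk0.
pose k' := k m.-1.
have hk' : 0 < k' by apply: hk0.
pose Ldw := fun w => #|[pred d : 'I_B | (d < k') && H w d]|.
have e1 : #|[pred w | Valid k M w && H w (crd bt (nth (0, 0) (Sof k M w m) (Cof k M w m)))]| * L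
   = \sum_w (Valid k M w : nat) * #|[pred z | lv k M i z && H w (Elvl k M bt z)]|.
  rewrite cardP big_distrl /=.
  transitivity (\sum_w \sum_z ((Valid k M w && lv k M i z &&
       H w (crd bt (nth (0, 0) (Sof k M w m) (Cof k M w m)))) : nat)).
    apply: eq_bigr => w _; rewrite /L cardP big_distrr /=; apply: eq_bigr => z _.
    by case: (Valid k M w); case: (lv k M i z); case: (H w _).
  rewrite (rep_sum _ _ (repL k M i) (getL k M i)); last first.
  - by move=> w z; apply: repL_repL.
  - by move=> w z; apply: getL_repL.
  apply: eq_bigr => w _; rewrite cardP big_distrr /=; apply: eq_bigr => z _.
  rewrite valid_repL.
  have -> : Sof k M (repL k M i w z) m = srt k M z.1.
    by rewrite Sof_repL hm /i eqxx.
  have -> : Cof k M (repL k M i w z) m = val z.2.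
    by rewrite Cof_repL hm /i eqxx.
  rewrite (hH _ w); last first.
    move=> l hl; rewrite Sof_repL /i inord_eqM //; last by apply: ltnW (leq_trans hl hm).
    by rewrite (ltn_eqF hl) andbF.
  by case: (Valid k M w); case: (lv k M i z); case: (H w _).
have e2 : #|[pred w | Valid k M w && H w (Cof k M w m.-1)]| * k'
   = \sum_w (Valid k M w : nat) * Ldw w.
  rewrite cardP big_distrl /=.
  transitivity (\sum_w \sum_(d : 'I_B) ((Valid k M w && (val d < k i') &&
       H w (Cof k M w m.-1)) : nat)).
    apply: eq_bigr => w _.
    have -> : k' = \sum_(d : 'I_B) (val d < k i' : nat).
      rewrite /k' /i' inordK // -[LHS](card_ord_lt _ _ (Bnd_ge k M _ hm')) -sum1dep_card [LHS]big_mkcond.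
      by apply: eq_bigr => d _; case: (_ < _).
    rewrite big_distrr /=; apply: eq_bigr => d _.
    by case: (Valid k M w); case: (_ < _); case: (H w _).
  rewrite (rep_sum _ _ (rep2 k M i') (fun w => w.2 i')); last first.
  - by move=> w d; apply: rep2_rep2.
  - by move=> w d; apply: get2_rep2.
  apply: eq_bigr => w _; rewrite /Ldw cardP big_distrr /=; apply: eq_bigr => d _.
  rewrite valid_rep2 Cof_rep2 hm' /i' eqxx /=.
  rewrite (hH _ w); last by move=> l _; rewrite Sof_rep2.
  rewrite /i' inordK //.
  by case: (Valid k M w); case: (_ < _); case: (H w _).
have e3 : forall w, #|[pred z | lv k M i z && H w (Elvl k M bt z)]| * k' = L * Ldw w.
  move=> w; apply: (partition_cnt _ B (lv k M i) (Elvl k M bt) k' L (H w)).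
  - exact: Bnd_ge.
  - by move=> z hz; apply: Elvl_lt.
  - by move=> x hx; apply: card_E.
have hLk : 0 < L * k' by rewrite muln_gt0 hL hk'.
apply/eqP; rewrite -(eqn_pmul2r hLk); apply/eqP.
rewrite mulnA e1 [RHS]mulnCA e2 big_distrl big_distrr /=; apply: eq_bigr => w _.
by rewrite -mulnA e3 mulnCA.
Qed.
End Key2.

Lemma desc_ext S S' b a i q : (forall l, l <= b + a -> S l = S' l) ->
  desc S b a i q = desc S' b a i q.
Proof.
elim: a i q => [|a IH] i q h //=.
rewrite h; last by rewrite addnS.
have h' : forall l, l <= b + a -> S l = S' l by move=> l hl; apply: h; rewrite addnS ltnW.
by case: ifP => _; apply: IH.
Qed.

Lemma Yf_ext S S' n x : (forall l, l <= n -> S l = S' l) -> Yf S n x = Yf S' n x.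
Proof.
elim: n x => [|n IH] x h //=.
rewrite h // !IH //; by move=> l hl; apply: h; rewrite ltnW.
Qed.

Lemma desc_S S b a i q :
  desc S b a.+1 i q = desc S b a (crd (~~ (q < 2 ^ a)) (nth (0, 0) (S (b + a).+1) i))
                          (if q < 2 ^ a then q else q - 2 ^ a).
Proof. by rewrite /=; case: ifP. Qed.

Section Stat.
Variables (k : nat -> nat) (M : nat).
Hypothesis hk0 : forall l, 0 < k l.
Hypothesis hk : forall l, 0 < l -> k l.-1 <= k l <= k l.-1 ^ 2.
Local Notation B := (Bnd k M).
Local Notation Om := (Omega k M).

Lemma stat_desc n a : forall q (G : Om -> nat -> bool), n + a <= M ->
  (forall w w', (forall l, l < n.+1 -> Sof k M w l = Sof k M w' l) -> forall x, G w x = G w' x) ->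
  #|[pred w | Valid k M w && G w (desc (Sof k M w) n a (Cof k M w (n + a)) q)]| =
  #|[pred w | Valid k M w && G w (Cof k M w n)]|.
Proof.
elim: a => [|a IH] q G hM hG.
  by apply: eq_card => w; rewrite addn0.
pose m := (n + a).+1.
have hm : m <= M by rewrite /m -addnS.
have e : forall w, desc (Sof k M w) n a.+1 (Cof k M w (n + a.+1)) q =
  desc (Sof k M w) n a (crd (~~ (q < 2 ^ a)) (nth (0, 0) (Sof k M w m) (Cof k M w m)))
     (if q < 2 ^ a then q else q - 2 ^ a).
  by move=> w; rewrite desc_S addnS.
pose q' := if q < 2 ^ a then q else q - 2 ^ a.
have hK : k m <= k m.-1 * k m.-1.
  by move: (hk m (ltn0Sn _)) => /andP [_]; rewrite mulnn.
have hdep : forall w w', (forall l, l < m -> Sof k M w l = Sof k M w' l) ->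
    forall x, G w (desc (Sof k M w) n a x q') = G w' (desc (Sof k M w') n a x q').
  move=> w w' hS x.
  rewrite (hG w w'); last by move=> l hl; apply: hS; rewrite /m; lia.
  congr (G w' _); apply: desc_ext => l hl; apply: hS; rewrite /m; lia.
have K1 := keyK k M m (~~ (q < 2 ^ a)) (fun w x => G w (desc (Sof k M w) n a x q')) hk0 (ltn0Sn _) hm hK hdep.
transitivity #|[pred w | Valid k M w && G w (desc (Sof k M w) n a (Cof k M w (n + a)) q')]|.
  rewrite -[X in _ = X]/(#|[pred w | Valid k M w && (fun w x => G w (desc (Sof k M w) n a x q')) w (Cof k M w m.-1)]|).
  rewrite -K1; apply: eq_card => w; by rewrite !inE e.
apply: IH; last exact: hG.
by apply: leq_trans hm; rewrite /m.
Qed.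
End Stat.

Lemma jdecomp M n j : 0 < j -> j.+1 * 2 ^ n <= 2 ^ M.+1 ->
  exists a q, [/\ n + a <= M, q < 2 ^ a & j = 2 ^ a + q].
Proof.
move=> j0 hj.
have := trunc_log_bounds (p := 2) (n := j) (isT : 1 < 2) j0.
move=> /= /andP [h1 h2].
exists (trunc_log 2 j), (j - 2 ^ trunc_log 2 j); split.
- rewrite -ltnS -(ltn_exp2l _ _ (isT : 1 < 2)).
  apply: leq_trans hj; rewrite expnD; have hp : 0 < 2 ^ n by rewrite expn_gt0.
  nia.
- move: h2; rewrite expnS; lia.
- lia.
Qed.

Section Stat2.
Variables (k : nat -> nat) (M : nat).
Hypothesis hk0 : forall l, 0 < k l.
Hypothesis hk : forall l, 0 < l -> k l.-1 <= k l <= k l.-1 ^ 2.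

Lemma stat_X n j (g : seq nat -> bool) : 0 < j -> j.+1 * 2 ^ n <= 2 ^ M.+1 ->
  #|[pred w | Valid k M w && g (Xblock k M w n j)]| =
  #|[pred w | Valid k M w && g (Xblock k M w n 1)]|.
Proof.
move=> j0 hj; have [a [q [hM hq ->]]] := jdecomp M n j j0 hj.
have hn : n <= M by apply: leq_trans hM; apply: leq_addr.
transitivity #|[pred w | Valid k M w && g (Yf (Sof k M w) n (desc (Sof k M w) n a (Cof k M w (n + a)) q))]|.
  by apply: eq_card => w; rewrite !inE Xblock_desc.
transitivity #|[pred w | Valid k M w && g (Yf (Sof k M w) n (Cof k M w n))]|.
  apply: (stat_desc k M hk0 hk n a q (fun w x => g (Yf (Sof k M w) n x))) => //.
  move=> w w' hS x; congr g; apply: Yf_ext => l hl; apply: hS; by rewrite ltnS.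
apply: eq_card => w; rewrite !inE.
have hn0 : n + 0 <= M by rewrite addn0.
have := Xblock_desc k M w n 0 0 hn0 (isT : 0 < 2 ^ 0).
rewrite expn0 addn0 /= => ->.
by rewrite addn0.
Qed.
End Stat2.

Section Core.
Variables (k : nat -> nat) (M : nat).
Local Notation B := (Bnd k M).
Local Notation Om := (Omega k M).

Definition blk (l : nat) (s : seq nat) (t : nat) : seq nat := take (2 ^ l) (drop (t * 2 ^ l) s).

Definition idx (w : Om) (l' : nat) (h : seq nat) : nat :=
  index h [seq Yf (Sof k M w) l' i | i <- iota 0 (k l')].

Definition Pset (w : Om) (n l' : nat) (s : seq nat) : {set 'I_B * 'I_B} :=
  [set (insubd (w.2 ord0) (idx w l' (take (2 ^ l') (blk l'.+1 s t))),
        insubd (w.2 ord0) (idx w l' (drop (2 ^ l') (blk l'.+1 s t)))) | t : 'I_(2 ^ (n - l'.+1))].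

Lemma idx_Y w l' i : Valid k M w -> l' <= M -> i < k l' -> idx w l' (Yf (Sof k M w) l' i) = i.
Proof.
move=> hv hl hi; rewrite /idx.
set r := [seq Yf (Sof k M w) l' i0 | i0 <- iota 0 (k l')].
have hin : Yf (Sof k M w) l' i \in r by apply/mapP; exists i => //; rewrite mem_iota add0n hi.
have hlt : index (Yf (Sof k M w) l' i) r < k l' by rewrite -(size_iota 0 (k l')) -(size_map (fun i0 => Yf (Sof k M w) l' i0)) index_mem.
have := nth_index [::] hin; rewrite (nth_map 0) ?size_iota // nth_iota // add0n.
by move/(Y_inj k M w l' _ _ hv hl hlt hi).
Qed.
End Core.

Section Core2.
Variables (k : nat -> nat) (M : nat).
Local Notation B := (Bnd k M).
Local Notation Om := (Omega k M).

Lemma core_R (w : Om) n l' c s : Valid k M w -> l'.+1 <= n -> n <= M -> c < k n ->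
  s = Yf (Sof k M w) n c -> good l'.+1 (2 ^ (n - l'.+1)) s ->
  (#|Pset k M w n l' s| == 2 ^ (n - l'.+1)) && (Pset k M w n l' s \subset w.1 (inord l'.+1)).
Proof.
move=> hv hln hn hc hs hg.
set m := 2 ^ (n - l'.+1).
set S := Sof k M w.
have hnl : l'.+1 + (n - l'.+1) = n by rewrite subnKC.
pose e := fun t => desc S l'.+1 (n - l'.+1) c t.
have hblk : forall t, t < m -> blk l'.+1 s t = Yf S l'.+1 (e t).
  move=> t ht; rewrite /blk hs /S -Yf_desc //; by rewrite hnl.
have he : forall t, e t < k l'.+1.
  move=> t; apply: desc_lt => //; rewrite hnl //.
have hl1 : l'.+1 <= M by apply: leq_trans hn.
have [hu hsz hco] := valid_Sof k M w l'.+1 hv (ltn0Sn _) hl1.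
have hp : forall t, nth (0, 0) (S l'.+1) (e t) \in S l'.+1.
  by move=> t; apply: mem_nth; rewrite /S hsz.
have hl' : l' <= M by apply: ltnW.
have hpr : forall t, t < m ->
  (idx k M w l' (take (2 ^ l') (blk l'.+1 s t)), idx k M w l' (drop (2 ^ l') (blk l'.+1 s t))) =
  nth (0, 0) (S l'.+1) (e t).
  move=> t ht; rewrite hblk //= take_size_cat ?size_Yf // drop_size_cat ?size_Yf //.
  move/andP: (hco _ (hp t)) => /= [h1 h2].
  by rewrite !idx_Y //; case: (nth _ _ _).
have hB : forall t, ((nth (0, 0) (S l'.+1) (e t)).1 < B) && ((nth (0, 0) (S l'.+1) (e t)).2 < B).
  move=> t; move/andP: (hco _ (hp t)) => /= [h1 h2].
  by rewrite !(leq_trans _ (Bnd_ge k M l' hl')).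
apply/andP; split.
  rewrite /Pset card_imset ?card_ord //.
  move=> t1 t2 e12.
  have hi : forall t : 'I_m,
    (insubd (w.2 ord0) (idx k M w l' (take (2 ^ l') (blk l'.+1 s t))),
     insubd (w.2 ord0) (idx k M w l' (drop (2 ^ l') (blk l'.+1 s t)))) =
    (insubd (w.2 ord0) (nth (0, 0) (S l'.+1) (e t)).1,
     insubd (w.2 ord0) (nth (0, 0) (S l'.+1) (e t)).2).
    by move=> t; rewrite -(hpr t (ltn_ord t)).
  move: e12; rewrite !hi => [[e1 e2]].
  have v1 : (nth (0, 0) (S l'.+1) (e t1)).1 = (nth (0, 0) (S l'.+1) (e t2)).1.
    move: (congr1 val e1); rewrite !val_insubd.
    by case/andP: (hB t1) => -> _; case/andP: (hB t2) => -> _.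
  have v2 : (nth (0, 0) (S l'.+1) (e t1)).2 = (nth (0, 0) (S l'.+1) (e t2)).2.
    move: (congr1 val e2); rewrite !val_insubd.
    by case/andP: (hB t1) => _ ->; case/andP: (hB t2) => _ ->.
  have ee : e t1 = e t2.
    apply/eqP; rewrite -(nth_uniq (0, 0) _ _ hu) ?hsz ?he //; apply/eqP.
    by move: v1 v2; case: (nth _ _ (e t1)); case: (nth _ _ (e t2)) => /= ? ? ? ? -> ->.
  have bb : blk l'.+1 s t1 = blk l'.+1 s t2 by rewrite !hblk // ee.
  apply/val_inj/eqP; rewrite -(nth_uniq [::] _ _ hg) ?size_map ?size_iota; try exact: ltn_ord.
  rewrite (nth_map 0); last by rewrite size_iota; apply: ltn_ord.
  rewrite (nth_map 0); last by rewrite size_iota; apply: ltn_ord.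
  rewrite !nth_iota; try by apply: ltn_ord.
  by rewrite !add0n; apply/eqP; exact: bb.
apply/subsetP => x /imsetP [t _ ->].
have hi : (insubd (w.2 ord0) (idx k M w l' (take (2 ^ l') (blk l'.+1 s t))),
     insubd (w.2 ord0) (idx k M w l' (drop (2 ^ l') (blk l'.+1 s t)))) =
    (insubd (w.2 ord0) (nth (0, 0) (S l'.+1) (e t)).1,
     insubd (w.2 ord0) (nth (0, 0) (S l'.+1) (e t)).2).
  by rewrite -(hpr t (ltn_ord t)).
rewrite hi; have := hp t; rewrite /S Sof_E // mem_srt => /exists_inP [q hq /eqP eq].
rewrite -eq /vv /=.
have -> : insubd (w.2 ord0) (val q.1) = q.1 by apply: val_inj; rewrite val_insubd ltn_ord.
have -> : insubd (w.2 ord0) (val q.2) = q.2 by apply: val_inj; rewrite val_insubd ltn_ord.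
by case: q hq eq.
Qed.
End Core2.

Section Cnt.
Variables (k : nat -> nat) (M : nat).
Local Notation B := (Bnd k M).
Local Notation Om := (Omega k M).

Lemma card_lvQ m (Q : pred {set 'I_B * 'I_B}) : 0 < m -> m <= M ->
  #|[pred z | lv k M (inord m) z && Q z.1]| = #|[pred T | setok k M (inord m) T && Q T]| * k m.
Proof.
move=> m0 hm; rewrite cardP sum_pairE cardP big_distrl /=.
apply: eq_bigr => T _.
transitivity (\sum_(d : 'I_B) ((setok k M (inord m) T && Q T) : nat) * (val d < k m : nat)).
  apply: eq_bigr => d _; rewrite /lv /= inordK //.
  by case: (setok _ _ _ _); case: (_ < _); case: (Q T).
rewrite -big_distrr /=; congr (_ * _).
rewrite -[RHS](card_ord_lt _ _ (Bnd_ge k M m hm)) -sum1dep_card [RHS]big_mkcond; apply: eq_bigr => d _; by case: (_ < _).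
Qed.

Lemma Pset_ext (w w' : Om) n l' s : w.2 ord0 = w'.2 ord0 ->
  (forall l, l <= l' -> Sof k M w l = Sof k M w' l) -> Pset k M w n l' s = Pset k M w' n l' s.
Proof.
move=> hd hS.
have hm : [seq Yf (Sof k M w) l' i | i <- iota 0 (k l')] = [seq Yf (Sof k M w') l' i | i <- iota 0 (k l')].
  by apply: eq_map => i; apply: Yf_ext.
by rewrite /Pset /idx hm hd.
Qed.

Lemma cnt_R n l' s : l'.+1 <= n -> n <= M -> 2 ^ (n - l'.+1) <= k l'.+1 ->
  #|[pred w | Valid k M w && ((#|Pset k M w n l' s| == 2 ^ (n - l'.+1)) &&
        (Pset k M w n l' s \subset w.1 (inord l'.+1)))]| * 'C(k l' * k l', k l'.+1) * k l'.+1
  <= #|[pred w | Valid k M w]| * ('C(k l' * k l' - 2 ^ (n - l'.+1), k l'.+1 - 2 ^ (n - l'.+1)) * k l'.+1).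
Proof.
move=> hln hn hmk.
set m := 2 ^ (n - l'.+1).
have hl1 : l'.+1 <= M by apply: leq_trans hn.
have hl' : l' <= M by apply: ltnW.
pose i := (inord l'.+1 : 'I_M.+1).
pose R' := fun (w : Om) (T : {set 'I_B * 'I_B}) => (#|Pset k M w n l' s| == m) && (Pset k M w n l' s \subset T).
have hL := card_lv k M l'.+1 (ltn0Sn _) hl1; rewrite /= in hL.
rewrite -mulnA -hL -/i.
have e1 : #|[pred w | Valid k M w && ((#|Pset k M w n l' s| == m) &&
        (Pset k M w n l' s \subset w.1 i))]| * #|[pred z | lv k M i z]|
   = \sum_w (Valid k M w : nat) * #|[pred z | lv k M i z && R' w z.1]|.
  rewrite [#|[pred w | Valid k M w && _]|]cardP big_distrl /=.
  transitivity (\sum_w \sum_z ((Valid k M w && lv k M i z &&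
       ((#|Pset k M w n l' s| == m) && (Pset k M w n l' s \subset w.1 i))) : nat)).
    apply: eq_bigr => w _; rewrite [#|[pred z | lv k M i z]|]cardP big_distrr /=; apply: eq_bigr => z _.
    by case: (Valid k M w); case: (lv k M i z); case: (#|Pset k M w n l' s| == m); case: (Pset k M w n l' s \subset _).
  rewrite (rep_sum _ _ (repL k M i) (getL k M i)); last first.
  - by move=> w z; apply: repL_repL.
  - by move=> w z; apply: getL_repL.
  apply: eq_bigr => w _; rewrite [#|[pred z | lv k M i z && R' w z.1]|]cardP big_distrr /=; apply: eq_bigr => z _.
  rewrite valid_repL.
  have -> : (repL k M i w z).1 i = z.1 by rewrite /repL /= ffunE eqxx.
  rewrite (Pset_ext (repL k M i w z) w); first last.
  - move=> l hl; rewrite Sof_repL /i inord_eqM //; last by apply: leq_trans hl _.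
    by rewrite (ltn_eqF (leq_ltn_trans hl (ltnSn _))) andbF.
  - rewrite /repL /= ffunE; case: eqP => // e.
    by move: (congr1 val e); rewrite /i /= inordK.
  by rewrite /R'; case: (Valid k M w); case: (lv k M i z); case: (#|Pset k M w n l' s| == m); case: (Pset k M w n l' s \subset _).
rewrite e1 [#|[pred w | Valid k M w]|]cardP big_distrl /=; apply: leq_sum => w _.
case: (Valid k M w); rewrite ?mul0n ?mul1n //.
rewrite /i card_lvQ // -/i leq_mul2r; apply/orP; right.
rewrite /R'; case hP: (#|Pset k M w n l' s| == m); last first.
  suff -> : #|[pred T | setok k M i T && (false && (Pset k M w n l' s \subset T))]| = 0 by [].
  by apply/eqP; rewrite cardP sum_nat_eq0; apply/forallP => T; rewrite andbF.
move/eqP: hP => hP.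
have hPk : #|Pset k M w n l' s| <= k l'.+1 by rewrite hP.
have := cnt_sup_le _ (region k B l') (Pset k M w n l' s) (k l'.+1) hPk.
rewrite card_region // hP; apply: leq_trans.
rewrite -cardsE; apply: subset_leq_card; apply/subsetP => T; rewrite !inE /i setok_inord //=.
by rewrite (andbC (#|T| == _)).
Qed.
End Cnt.

Section Step2.
Variables (k : nat -> nat) (M : nat).
Hypothesis hk0 : forall l, 0 < k l.

Lemma step2 n j l' s : 0 < j -> j.+1 * 2 ^ n <= 2 ^ M.+1 -> l'.+1 <= n ->
  2 ^ (n - l'.+1) <= k l'.+1 -> good l'.+1 (2 ^ (n - l'.+1)) s ->
  #|[pred w | Valid k M w && (Xblock k M w n j == s)]| * 'C(k l' * k l', k l'.+1) <=
  #|[pred w | Valid k M w]| * 'C(k l' * k l' - 2 ^ (n - l'.+1), k l'.+1 - 2 ^ (n - l'.+1)).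
Proof.
move=> j0 hj hln hmk hg.
have [a [q [hM hq ej]]] := jdecomp M n j j0 hj.
have hn : n <= M by apply: leq_trans hM; apply: leq_addr.
rewrite -(leq_pmul2r (hk0 l'.+1)) -[X in _ <= X]mulnA.
apply: leq_trans (cnt_R k M n l' s hln hn hmk).
rewrite leq_mul2r; apply/orP; right.
rewrite leq_mul2r; apply/orP; right.
apply: subset_leq_card; apply/subsetP => w; rewrite !inE => /andP [hv /eqP hs].
rewrite hv /=; apply: (core_R k M w n l' (desc (Sof k M w) n a (Cof k M w (n + a)) q)) => //.
- apply: desc_lt => //; exact: valid_Cof.
- by rewrite -hs ej Xblock_desc.
Qed.
End Step2.

Local Open Scope R_scope.

Lemma ln_le' (x y : R) : (0 < x) -> (x <= y) -> (ln x <= ln y).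
Proof.
move=> hx hxy; case: (Rle_lt_or_eq_dec _ _ hxy) => h.
  by apply: Rlt_le; apply: ln_increasing.
by rewrite h; apply: Rle_refl.
Qed.

Lemma bigR_le (T : eqType) (r : seq T) (F G : T -> R) :
  (forall x, x \in r -> (F x <= G x)) ->
  (\big[Rplus/R0]_(x <- r) F x <= \big[Rplus/R0]_(x <- r) G x).
Proof.
elim: r => [|a r IH] h; first by rewrite !big_nil; apply: Rle_refl.
rewrite !big_cons; apply: Rplus_le_compat.
  by apply: h; rewrite in_cons eqxx.
by apply: IH => x hx; apply: h; rewrite in_cons hx orbT.
Qed.

Lemma bigR_scal (T : Type) (r : seq T) (F : T -> R) c :
  (c * \big[Rplus/R0]_(x <- r) F x = \big[Rplus/R0]_(x <- r) (c * F x)).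
Proof.
elim: r => [|a r IH]; first by rewrite !big_nil; ring.
by rewrite !big_cons -IH; ring.
Qed.

Lemma bigR_div (T : Type) (r : seq T) (F : T -> R) c :
  (\big[Rplus/R0]_(x <- r) F x / c = \big[Rplus/R0]_(x <- r) (F x / c)).
Proof.
elim: r => [|a r IH]; first by rewrite !big_nil; rewrite /Rdiv; ring.
by rewrite !big_cons -IH /Rdiv; ring.
Qed.

Lemma INR_sum (T : Type) (r : seq T) (F : T -> nat) :
  INR (\sum_(x <- r) F x) = \big[Rplus/R0]_(x <- r) INR (F x).
Proof.
elim: r => [|a r IH]; first by rewrite !big_nil.
by rewrite !big_cons plus_INR IH.
Qed.

Lemma INR_leq m n : (m <= n)%N -> (INR m <= INR n).
Proof. by move=> h; apply: le_INR; apply/leP. Qed.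

Lemma INR_posn n : (0 < n)%N -> (0 < INR n).
Proof. by move=> h; apply: lt_0_INR; apply/ltP. Qed.

Section Ent.
Variables (k : nat -> nat) (M : nat).
Local Notation Om := (Omega k M).

Lemma cnt_partition (f : Om -> seq nat) (gd : seq nat -> bool) :
  #|[pred w | Valid k M w && gd (f w)]| =
  \sum_(s <- undup [seq f w | w <- enum [pred w : Om | Valid k M w]])
     gd s * #|[pred w | Valid k M w && (f w == s)]|.
Proof.
set r := undup _.
rewrite cardP.
symmetry.
rewrite (eq_bigr (fun s => \sum_w (gd s * (Valid k M w && (f w == s)) : nat))); last first.
  by move=> s _; rewrite cardP big_distrr.
rewrite exchange_big; apply: eq_bigr => w _.
case hv: (Valid k M w) => /=; last by rewrite big1 // => s _; rewrite muln0.
transitivity (\sum_(s <- r) gd (f w) * (s == f w : nat)).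
  by apply: eq_bigr => s _; rewrite eq_sym; case: eqP => [->|]; rewrite ?muln0 ?muln1.
rewrite -big_distrr sum_bool_count /=.
have := count_uniq_mem (f w) (undup_uniq [seq f w0 | w0 <- enum [pred w0 : Om | Valid k M w0]]).
rewrite mem_undup map_f ?mem_enum ?inE // => e.
by rewrite -/r in e; rewrite e muln1.
Qed.

Lemma entropy_lb (f : Om -> seq nat) (gd : seq nat -> bool) (beta : R) :
  (forall w, Valid k M w -> gd (f w) -> ln (prob k M (fun w' => f w' == f w)) <= - beta) ->
  beta * prob k M (fun w => gd (f w)) <= entropy k M f.
Proof.
move=> hb.
set r := undup [seq f w | w <- enum [pred w : Om | Valid k M w]].
have hr : forall s, s \in r -> exists w, Valid k M w /\ f w = s.
  move=> s; rewrite mem_undup => /mapP [w]; rewrite mem_enum inE => hv ->.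
  by exists w.
have hprob : prob k M (fun w => gd (f w)) =
    \big[Rplus/R0]_(s <- r) (if gd s then prob k M (fun w => f w == s) else 0).
  rewrite /prob cnt_partition INR_sum bigR_div; apply: eq_bigr => s _.
  by case: (gd s); rewrite ?mul1n ?mul0n //= /Rdiv Rmult_0_l.
rewrite hprob bigR_scal /entropy; apply: bigR_le => s hs.
have [w [hv hw]] := hr s hs.
set p := prob k M (fun w => f w == s).
have hc1 : (0 < #|[pred w0 | Valid k M w0 && (f w0 == s)]|)%N.
  by apply/card_gt0P; exists w; rewrite inE hv hw eqxx.
have hN1 : (0 < #|[pred w0 | Valid k M w0]|)%N.
  by apply/card_gt0P; exists w; rewrite inE hv.
have hcN : (#|[pred w0 | Valid k M w0 && (f w0 == s)]| <= #|[pred w0 | Valid k M w0]|)%N.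
  by apply: subset_leq_card; apply/subsetP => x; rewrite !inE => /andP [].
have hp0 : 0 < p.
  rewrite /p /prob /Rdiv; apply: Rmult_lt_0_compat; first exact: INR_posn.
  by apply: Rinv_0_lt_compat; apply: INR_posn.
have hp1 : p <= 1.
  rewrite /p /prob; apply: (Rmult_le_reg_r (INR #|[pred w0 | Valid k M w0]|)); first exact: INR_posn.
  rewrite /Rdiv Rmult_assoc Rinv_l ?Rmult_1_r ?Rmult_1_l; first exact: INR_leq.
  by apply: Rgt_not_eq; apply: INR_posn.
case hg: (gd s).
  have hl := hb w hv; rewrite hw in hl; have {}hl := hl hg.
  rewrite -/p in hl.
  have h := Rmult_le_compat_l p beta (- ln p) (Rlt_le _ _ hp0) (ltac:(lra)).
  lra.
have hl : ln p <= 0 by rewrite -ln_1; apply: ln_le'.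
have h := Rmult_le_compat_l p (ln p) 0 (Rlt_le _ _ hp0) hl.
lra.
Qed.
End Ent.

Local Open Scope R_scope.

Fixpoint all_le (s : seq R) (c : R) : Prop :=
  match s with [::] => True | x :: s' => x <= c /\ all_le s' c end.

Lemma foldr_max_le (s : seq R) x c : all_le s c -> x <= c -> foldr Rmax x s <= c.
Proof.
elim: s => [|y s IH] //= [h1 h2] hx.
by apply: Rmax_lub => //; apply: IH.
Qed.

Lemma maxR_le (s : seq R) c : all_le s c -> 0 <= c -> maxR s <= c.
Proof. case: s => [|x s] //= [h1 h2] _; exact: foldr_max_le. Qed.

Lemma all_le_map (r : seq nat) (P : pred nat) (F : nat -> R) c :
  (forall l, l \in r -> P l -> F l <= c) -> all_le [seq F l | l <- r & P l] c.
Proof.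
elim: r => [|a r IH] //= h.
case hP: (P a) => /=.
  split; first by apply: h; rewrite ?in_cons ?eqxx.
  by apply: IH => l hl; apply: h; rewrite in_cons hl orbT.
by apply: IH => l hl; apply: h; rewrite in_cons hl orbT.
Qed.

Lemma entropy_ge0 k M (f : Omega k M -> seq nat) : 0 <= entropy k M f.
Proof.
have := entropy_lb k M f (fun _ => false) 0 (fun w _ h => False_ind _ (notF h)).
by rewrite Rmult_0_l.
Qed.

Section Final.
Variables (k : nat -> nat) (M : nat).
Hypothesis hk0 : forall l, (0 < k l)%N.
Hypothesis hk : forall l, (0 < l)%N -> (k l.-1 <= k l <= k l.-1 ^ 2)%N.

Lemma per_l n j l : (0 < j)%N -> (j.+1 * 2 ^ n <= 2 ^ M.+1)%N -> (0 < l)%N -> (l <= n)%N ->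
  (2 ^ (n - l) <= k l)%N ->
  binterm k n l * prob k M (Aevent k M n l) <= entropy k M (fun w => Xblock k M w n j).
Proof.
move=> hj hM; case: l => [//|l'] _ hln hml.
set m := (2 ^ (n - l'.+1))%N.
have hprob : prob k M (Aevent k M n l'.+1) = prob k M (fun w => good l'.+1 m (Xblock k M w n j)).
  rewrite /prob; congr (Rdiv (INR _) _).
  rewrite (stat_X k M hk0 hk n j (good l'.+1 m) hj hM).
  by apply: eq_card => w; rewrite !inE Aevent_good.
rewrite hprob; apply: (entropy_lb k M (fun w => Xblock k M w n j) (good l'.+1 m)) => w hv hg.
set s := Xblock k M w n j.
have hst := step2 k M hk0 n j l' s hj hM hln hml hg.
set c := #|[pred w0 | Valid k M w0 && (Xblock k M w0 n j == s)]| in hst.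
set N := #|[pred w0 | Valid k M w0]| in hst.
set C := 'C(k l' * k l', k l'.+1) in hst.
set C' := 'C(k l' * k l' - m, k l'.+1 - m) in hst.
have hpe : prob k M (fun w' => Xblock k M w' n j == s) = Rdiv (INR c) (INR N) by [].
have hbe : binterm k n l'.+1 = ln (INR C) - ln (INR C') by rewrite /binterm /= -mulnn.
rewrite hpe hbe.
have hkk : (k l'.+1 <= k l' * k l')%N by move: (hk l'.+1 (ltn0Sn _)) => /andP [_]; rewrite mulnn.
have hC : (0 < C)%N by rewrite /C bin_gt0.
have hC' : (0 < C')%N by rewrite /C' bin_gt0 leq_sub2r.
have hc : (0 < c)%N by apply/card_gt0P; exists w; rewrite inE hv eqxx.
have hN : (0 < N)%N by apply/card_gt0P; exists w; rewrite inE hv.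
have hNR := INR_posn _ hN.
have hCR := INR_posn _ hC.
have hC'R := INR_posn _ hC'.
have hcR := INR_posn _ hc.
have hp0 : 0 < INR c / INR N by apply: Rmult_lt_0_compat => //; apply: Rinv_0_lt_compat.
have key : INR c / INR N * INR C <= INR C'.
  apply: (Rmult_le_reg_r (INR N)) => //.
  replace (INR c / INR N * INR C * INR N) with (INR c * INR C) by (field; lra).
  rewrite -!mult_INR; apply: INR_leq; move: hst; nia.
have := ln_le' _ _ (Rmult_lt_0_compat _ _ hp0 hCR) key.
rewrite ln_mult //; lra.
Qed.
End Final.

Local Close Scope R_scope.

Theorem proposition11 (k : nat -> nat)
  (hk0 : forall l, 0 < k l)
  (hk : forall l, 0 < l -> k l.-1 <= k l <= k l.-1 ^ 2)
  (n j M : nat) (hn : 0 < n) (hj : 0 < j)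
  (hM : j.+1 * 2 ^ n <= 2 ^ M.+1) :
  Rle (maxR [seq Rmult (binterm k n l) (prob k M (Aevent k M n l))
              | l <- iota 1 n & 2 ^ (n - l) <= k l])
      (entropy k M (fun w => Xblock k M w n j)).
Proof.
apply: maxR_le; last exact: entropy_ge0.
apply: all_le_map => l; rewrite mem_iota => /andP [h1 h2] hml.
apply: per_l => //; lia.
Qed.
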